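(* Let $\mathcal{A}$ be a Desargues affine plane, let $O\neq I$ be points, and let $\varphi$ be a translation of $\mathcal{A}$. Equip $\ell^{OI}$ with the skew field structure with zero $O$ and unit $I$, and the line $\varphi(\ell^{OI})$ with the skew field structure with zero $\varphi(O)$ and unit $\varphi(I)$. Then for all $A,B,C\in\ell^{OI}$ with $B\neq C$, \[ \varphi(r(A,B;C))=r(\varphi(A),\varphi(B);\varphi(C)), \] where the ratio on the left is computed in $\ell^{OI}$ and the ratio on the right in $\varphi(\ell^{OI})$.
   Context: A Desargues affine plane is an incidence structure of points and lines in which any two distinct points lie on exactly one line, through a point not on a line $\ell$ there is exactly one line disjoint from $\ell$ (Playfair), there exist three non-collinear points, and Desargues' axiom holds: if $A,B,C,A',B',C'$ are points such that the pairwise distinct lines $AA',BB',CC'$ are either all parallel or all pass through one point, and $AB\parallel A'B'$, $BC\parallel B'C'$ (with $AB\neq A'B'$, $BC\neq B'C'$, $A\ne C$, $A'\ne C'$), then $AC\parallel A'C'$. Skew field on a line: for distinct points $O,I$ and points $A,B$ on the line $\ell^{OI}$, addition is defined by: choose a point $B_1\notin\ell^{OI}$; let $P_1$ be the intersection of the line through $B_1$ parallel to $\ell^{OI}$ with the line through $A$ parallel to $OB_1$; then $A+B$ is the intersection of $\ell^{OI}$ with the line through $P_1$ parallel to $BB_1$. Multiplication is defined by: choose $B_1\notin\ell^{OI}$; let $P_1$ be the intersection of the line through $A$ parallel to $IB_1$ with the line $OB_1$; then $A\cdot B$ is the intersection of $\ell^{OI}$ with the line through $P_1$ parallel to $BB_1$.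 These operations do not depend on the choice of $B_1$ and make $(\ell^{OI},+,\cdot)$ a skew field with zero $O$ and unit $I$; the same construction applies to any line with any chosen pair of distinct points as zero and unit. $-X$ and $X^{-1}$ denote additive and multiplicative inverses, $X-Y=X+(-Y)$. Ratio of three points on such a line: $r(A,B;C)=(B-C)^{-1}(A-C)$ for $B\neq C$. A dilatation of $\mathcal{A}$ is a collineation $\delta$ such that $\delta(P)\delta(Q)\parallel PQ$ for all points $P\neq Q$. A translation is either the identity or a dilatation with no fixed point. *)

(* Defs.v *)
From Stdlib Require Import ClassicalEpsilon.

Set Implicit Arguments.

Section AffinePlane.
Variables (point line : Type) (inc : point -> line -> Prop).

Definition is_lt (P Q : point) (l : line) : Prop := P <> Q /\ inc P l /\ inc Q l.

Definition par (l m : line) : Prop := l = m \/ (forall X, ~ (inc X l /\ inc X m)).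

Definition collinear (A B C : point) : Prop :=
  exists l, inc A l /\ inc B l /\ inc C l.

Definition desargues_axiom : Prop :=
  forall (A B C A' B' C' : point) (a b c p p' q q' s s' : line),
    is_lt A A' a -> is_lt B B' b -> is_lt C C' c ->
    a <> b -> b <> c -> a <> c ->
    ((par a b /\ par b c /\ par a c) \/
       (exists Z, inc Z a /\ inc Z b /\ inc Z c)) ->
    is_lt A B p -> is_lt A' B' p' -> par p p' -> p <> p' ->
    is_lt B C q -> is_lt B' C' q' -> par q q' -> q <> q' ->
    A <> C -> A' <> C' ->
    is_lt A C s -> is_lt A' C' s' -> par s s'.

Definition desargues_affine_plane : Prop :=
  (forall P Q, P <> Q -> exists! l, inc P l /\ inc Q l) /\
  (forall P l, ~ inc P l ->
     exists! m, inc P m /\ (forall X, ~ (inc X l /\ inc X m))) /\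
  (exists A B C : point, ~ collinear A B C) /\
  desargues_axiom.

Definition image_is (f : point -> point) (l m : line) : Prop :=
  forall X, inc X m <-> exists P, inc P l /\ f P = X.

Definition collineation (f : point -> point) : Prop :=
  (forall P Q, f P = f Q -> P = Q) /\ (forall X, exists P, f P = X) /\
  (forall l, exists m, image_is f l m) /\
  (forall m, exists l, image_is f l m).

Definition dilatation (f : point -> point) : Prop :=
  collineation f /\
  forall P Q l m, is_lt P Q l -> is_lt (f P) (f Q) m -> par l m.

Definition translation (f : point -> point) : Prop :=
  (forall P, f P = P) \/ (dilatation f /\ forall P, f P <> P).

Definition choose_pt (d : point) (Pr : point -> Prop) : point :=
  epsilon (inhabits d) Pr.

Definition on_OI (O I X : point) : Prop :=
  exists l, is_lt O I l /\ inc X l.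

Definition aux_pt (O I : point) : point :=
  choose_pt O (fun X => forall l, is_lt O I l -> ~ inc X l).

Definition add_OI (O I A B : point) : point :=
  let B1 := aux_pt O I in
  choose_pt O (fun S => exists (l m1 k m2 j n : line) (P1 : point),
    is_lt O I l /\
    inc B1 m1 /\ par m1 l /\
    is_lt O B1 k /\ inc A m2 /\ par m2 k /\
    inc P1 m1 /\ inc P1 m2 /\
    is_lt B B1 j /\ inc P1 n /\ par n j /\
    inc S n /\ inc S l).

Definition mul_OI (O I A B : point) : point :=
  let B1 := aux_pt O I in
  choose_pt O (fun S => exists (l h m2 k j n : line) (P1 : point),
    is_lt O I l /\
    is_lt I B1 h /\ inc A m2 /\ par m2 h /\
    is_lt O B1 k /\
    inc P1 m2 /\ inc P1 k /\
    is_lt B B1 j /\ inc P1 n /\ par n j /\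
    inc S n /\ inc S l).

Definition opp_OI (O I X : point) : point :=
  choose_pt O (fun Y => on_OI O I Y /\ add_OI O I X Y = O).

Definition inv_OI (O I X : point) : point :=
  choose_pt O (fun Y => on_OI O I Y /\ mul_OI O I X Y = I).

Definition sub_OI (O I X Y : point) : point := add_OI O I X (opp_OI O I Y).

Definition ratio_OI (O I A B C : point) : point :=
  mul_OI O I (inv_OI O I (sub_OI O I B C)) (sub_OI O I A C).

End AffinePlane.

(* Main.v *)
Require Import Defs.
From Stdlib Require Import ClassicalEpsilon Classical.

Section Geo.
Variables (point line : Type) (inc : point -> line -> Prop).
Hypothesis HA : desargues_affine_plane inc.

Notation is_lt := (is_lt inc).
Notation par := (par inc).

Lemma lines_eq P Q l m : P <> Q -> inc P l -> inc Q l -> inc P m -> inc Q m -> l = m.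
Proof.
  destruct HA as [H1 _]. intros H ? ? ? ?. destruct (H1 P Q H) as [x [_ Hu]].
  transitivity x; [symmetry|]; apply Hu; auto.
Qed.

Lemma line_ex P Q : P <> Q -> exists l, inc P l /\ inc Q l.
Proof. destruct HA as [H1 _]. intros H. destruct (H1 P Q H) as [x [Hx _]]. eauto. Qed.

Lemma meet_uniq X Y l m : l <> m -> inc X l -> inc X m -> inc Y l -> inc Y m -> X = Y.
Proof.
  intros. destruct (classic (X = Y)); auto. exfalso. apply H. eapply lines_eq; eauto.
Qed.

Lemma par_refl l : par l l.
Proof. left; auto. Qed.

Lemma par_sym l m : par l m -> par m l.
Proof. intros [->|H]; [left; auto|right]. intros X [? ?]. apply (H X); auto. Qed.

Lemma par_inter_eq l m X : par l m -> inc X l -> inc X m -> l = m.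
Proof. intros [->|H] ? ?; auto. exfalso; apply (H X); auto. Qed.

Lemma par_ex P l : exists m, inc P m /\ par m l.
Proof.
  destruct (classic (inc P l)). exists l; split; auto. apply par_refl.
  destruct HA as [_ [H2 _]]. destruct (H2 P l H) as [m [[Hm Hd] _]].
  exists m; split; auto. right. intros X [? ?]. apply (Hd X); auto.
Qed.

Lemma par_uniq P l m m' : inc P m -> inc P m' -> par m l -> par m' l -> m = m'.
Proof.
  intros Hm Hm' Hp Hp'.
  destruct (classic (inc P l)).
  - transitivity l; [|symmetry]; eapply par_inter_eq; eauto.
  - destruct HA as [_ [H2 _]]. destruct (H2 P l H) as [x [_ Hu]].
    assert (Hd: forall q, inc P q -> par q l -> x = q).
    { intros q Hq [->|Hqd]. contradiction. apply Hu. split; auto.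
      intros X [? ?]. apply (Hqd X); auto. }
    transitivity x; [symmetry|]; auto.
Qed.

Lemma par_trans a b c : par a b -> par b c -> par a c.
Proof.
  intros Hab Hbc. destruct (classic (exists X, inc X a /\ inc X c)) as [[X [? ?]]|Hn].
  - left. eapply (par_uniq X b); eauto. apply par_sym; auto.
  - right. intros X [? ?]. apply Hn; eauto.
Qed.

Lemma not_par_meet l m : ~ par l m -> exists X, inc X l /\ inc X m.
Proof.
  intros H. apply NNPP. intro Hn. apply H. right. intros X [? ?]. apply Hn; eauto.
Qed.

Lemma meet_par X l m m' : inc X l -> inc X m -> l <> m -> par m' m ->
  exists Y, inc Y l /\ inc Y m'.
Proof.
  intros. apply not_par_meet. intro Hp. apply H1. eapply par_inter_eq; eauto.
  eapply par_trans; eauto.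
Qed.

Lemma off_line l : exists P, ~ inc P l.
Proof.
  destruct HA as [_ [_ [[A [B [C Hn]]] _]]].
  destruct (classic (inc A l)); [|eauto].
  destruct (classic (inc B l)); [|eauto].
  destruct (classic (inc C l)); [|eauto].
  exfalso; apply Hn; exists l; auto.
Qed.

Lemma par_notin m l Z X : par m l -> inc Z m -> ~ inc Z l -> inc X m -> ~ inc X l.
Proof. intros Hp HZ HZl HX HXl. apply HZl. rewrite <- (par_inter_eq _ _ _ Hp HX HXl). auto. Qed.

Lemma par_ne n j l X : par n j -> j <> l -> inc X j -> inc X l -> n <> l.
Proof. intros Hp Hjl Hj Hl ->. apply Hjl. symmetry. eapply par_inter_eq; eauto. Qed.

Lemma lt_sym P Q l : is_lt P Q l -> is_lt Q P l.
Proof. intros [? [? ?]]; split; auto. Qed.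


Definition off O I b := forall l, is_lt O I l -> ~ inc b l.

Definition addp O I b A B S := exists (l m1 k m2 j n : line) (P1 : point),
    is_lt O I l /\ inc b m1 /\ par m1 l /\ is_lt O b k /\ inc A m2 /\ par m2 k /\
    inc P1 m1 /\ inc P1 m2 /\ is_lt B b j /\ inc P1 n /\ par n j /\ inc S n /\ inc S l.

Definition mulp O I b A B S := exists (l h m2 k j n : line) (P1 : point),
    is_lt O I l /\ is_lt I b h /\ inc A m2 /\ par m2 h /\ is_lt O b k /\
    inc P1 m2 /\ inc P1 k /\ is_lt B b j /\ inc P1 n /\ par n j /\ inc S n /\ inc S l.

Lemma add_OI_eq O I A B : add_OI inc O I A B = choose_pt O (addp O I (aux_pt inc O I) A B).
Proof. reflexivity. Qed.
Lemma mul_OI_eq O I A B : mul_OI inc O I A B = choose_pt O (mulp O I (aux_pt inc O I) A B).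
Proof. reflexivity. Qed.

Ltac dadd H := destruct H as (?l & ?m1 & ?k & ?m2 & ?j & ?n & ?P1 & [?HOI [?HOl ?HIl]] & ?Hbm1 & ?Hm1 &
   [?HOb [?HOk ?Hbk]] & ?HAm2 & ?Hm2 & ?HP1m1 & ?HP1m2 & [?HBb [?HBj ?Hbj]] & ?HP1n & ?Hn & ?HSn & ?HSl).

Lemma par_l_notin m1 l b X : par m1 l -> inc b m1 -> ~ inc b l -> inc X l -> ~ inc X m1.
Proof. intros Hp Hb Hbl HX HXm. apply Hbl. rewrite <- (par_inter_eq _ _ _ Hp HXm HX). auto. Qed.

Lemma add_ex O I l b A B : is_lt O I l -> ~ inc b l -> inc B l -> exists S, addp O I b A B S.
Proof.
  intros [HOI [HO HI]] Hb HB.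
  destruct (par_ex b l) as [m1 [Hbm1 Hm1]].
  assert (HOb: O <> b) by (intro; subst; auto).
  destruct (line_ex O b HOb) as [k [HOk Hbk]].
  destruct (par_ex A k) as [m2 [HAm2 Hm2]].
  assert (Hkm1: m1 <> k).
  { intro E. apply (par_l_notin m1 l b O); auto. all: rewrite E; auto. }
  destruct (meet_par b m1 k m2 Hbm1 Hbk Hkm1 Hm2) as [P1 [HP1m1 HP1m2]].
  assert (HBb: B <> b) by (intro; subst; auto).
  destruct (line_ex B b HBb) as [j [HBj Hbj]].
  destruct (par_ex P1 j) as [n [HP1n Hn]].
  assert (Hjl: l <> j) by (intro; subst; auto).
  destruct (meet_par B l j n HB HBj Hjl Hn) as [S [HSl HSn]].
  exists S, l, m1, k, m2, j, n, P1. unfold Defs.is_lt. repeat split; auto.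
Qed.


Lemma ne_of_in_notin (X Y : point) l : inc X l -> ~ inc Y l -> X <> Y.
Proof. intros H1 H2 ->; auto. Qed.
Lemma lne_of_in_notin X (l m : line) : inc X l -> ~ inc X m -> l <> m.
Proof. intros H1 H2 ->; auto. Qed.

Lemma m1_ne_m2 l m1 b m2 k O : par m1 l -> inc b m1 -> ~ inc b l -> par m2 k -> inc b k ->
  inc O k -> inc O l -> m1 <> m2.
Proof.
  intros Hm1 Hb Hbl Hm2 Hbk HOk HOl E. subst m2.
  assert (m1 = k) by (eapply par_inter_eq; eauto). subst k.
  apply (par_l_notin m1 l b O); auto.
Qed.

Ltac dA H l m1 k m2 j n P := destruct H as (l & m1 & k & m2 & j & n & P & [?HOI [?HOl ?HIl]] & ?Hbm1 & ?Hm1 &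
   [?HOb [?HOk ?Hbk]] & ?HAm2 & ?Hm2 & ?HPm1 & ?HPm2 & [?HBb [?HBj ?Hbj]] & ?HPn & ?Hn & ?HSn & ?HSl).

Lemma add_uniq O I b A B S S' : off O I b -> addp O I b A B S -> addp O I b A B S' -> S = S'.
Proof.
  intros Hoff H H'. dA H l m1 k m2 j n P. dA H' l' m1' k' m2' j' n' P'.
  assert (l' = l) by (apply (lines_eq O I); auto). subst l'.
  assert (Hb := Hoff l (conj HOI (conj HOl HIl))).
  assert (m1' = m1) by (apply (par_uniq b l); auto). subst m1'.
  assert (k' = k) by (apply (lines_eq O b); auto). subst k'.
  assert (m2' = m2) by (apply (par_uniq A k); auto). subst m2'.
  assert (m1 <> m2) by (apply (m1_ne_m2 l m1 b m2 k O); auto).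
  assert (P' = P) by (apply (meet_uniq _ _ m1 m2); auto). subst P'.
  assert (j' = j) by (apply (lines_eq B b); auto). subst j'.
  assert (n' = n) by (apply (par_uniq P j); auto). subst n'.
  assert (HPl : ~ inc P l) by (apply (par_notin m1 l b P); auto).
  apply (meet_uniq _ _ n l); auto. apply (lne_of_in_notin P); auto.
Qed.

Lemma add_cancel2 O I l b X Y Y' S : is_lt O I l -> ~ inc b l -> inc Y l -> inc Y' l ->
  addp O I b X Y S -> addp O I b X Y' S -> Y = Y'.
Proof.
  intros Hl Hb HY HY' H H'. dA H l0 m1 k m2 j n P. dA H' l' m1' k' m2' j' n' P'.
  destruct Hl as [_ [HOx HIx]].
  assert (l0 = l) by (apply (lines_eq O I); auto). subst l0.
  assert (l' = l) by (apply (lines_eq O I); auto). subst l'.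
  assert (m1' = m1) by (apply (par_uniq b l); auto). subst m1'.
  assert (k' = k) by (apply (lines_eq O b); auto). subst k'.
  assert (m2' = m2) by (apply (par_uniq X k); auto). subst m2'.
  assert (m1 <> m2) by (apply (m1_ne_m2 l m1 b m2 k O); auto).
  assert (P' = P) by (apply (meet_uniq _ _ m1 m2); auto). subst P'.
  assert (HPl : ~ inc P l) by (apply (par_notin m1 l b P); auto).
  assert (HPS: P <> S) by (intro; subst; auto).
  assert (n' = n) by (apply (lines_eq P S); auto).
  subst n'.
  assert (j' = j) by (apply (par_uniq b n); auto; apply par_sym; auto). subst j'.
  apply (meet_uniq _ _ j l); auto. apply (lne_of_in_notin b); auto.
Qed.

Lemma add_cancel1 O I l b X X' Y S : is_lt O I l -> ~ inc b l -> inc X l -> inc X' l ->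
  addp O I b X Y S -> addp O I b X' Y S -> X = X'.
Proof.
  intros Hl Hb HX HX' H H'. dA H l0 m1 k m2 j n P. dA H' l' m1' k' m2' j' n' P'.
  destruct Hl as [_ [HOx HIx]].
  assert (l0 = l) by (apply (lines_eq O I); auto). subst l0.
  assert (l' = l) by (apply (lines_eq O I); auto). subst l'.
  assert (m1' = m1) by (apply (par_uniq b l); auto). subst m1'.
  assert (k' = k) by (apply (lines_eq O b); auto). subst k'.
  assert (j' = j) by (apply (lines_eq Y b); auto). subst j'.
  assert (n' = n) by (apply (par_uniq S j); auto). subst n'.
  assert (HSm1 : ~ inc S m1) by (apply (par_l_notin m1 l b S); auto).
  assert (P' = P) by (apply (meet_uniq _ _ n m1); auto; apply (lne_of_in_notin S); auto). subst P'.
  assert (m2' = m2) by (apply (par_uniq P k); auto). subst m2'.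
  assert (HPl : ~ inc P l) by (apply (par_notin m1 l b P); auto).
  apply (meet_uniq _ _ m2 l); auto. apply (lne_of_in_notin P); auto.
Qed.

Lemma opp_ex O I l b X : is_lt O I l -> ~ inc b l -> exists Y, inc Y l /\ addp O I b X Y O.
Proof.
  intros Hl Hb. pose proof Hl as [HOI [HO HI]].
  destruct (par_ex b l) as [m1 [Hbm1 Hm1]].
  assert (HOb: O <> b) by (intro; subst; auto).
  destruct (line_ex O b HOb) as [k [HOk Hbk]].
  destruct (par_ex X k) as [m2 [HXm2 Hm2]].
  assert (Hkm1: m1 <> k).
  { intro E. apply (par_l_notin m1 l b O); auto. all: rewrite E; auto. }
  destruct (meet_par b m1 k m2 Hbm1 Hbk Hkm1 Hm2) as [P1 [HP1m1 HP1m2]].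
  assert (HPl : ~ inc P1 l) by (apply (par_notin m1 l b P1); auto).
  assert (HPO : P1 <> O) by (intro; subst; auto).
  destruct (line_ex P1 O HPO) as [n [HPn HOn]].
  destruct (par_ex b n) as [j [Hbj Hj]].
  assert (Hnl: l <> n) by (intro; subst; auto).
  destruct (meet_par O l n j HO HOn Hnl Hj) as [Y [HYl HYj]].
  exists Y. split; auto.
  exists l, m1, k, m2, j, n, P1. unfold Defs.is_lt. repeat split; auto.
  intro; subst; auto. apply par_sym; auto.
Qed.

Lemma add_O O I b B S : off O I b -> on_OI inc O I B -> addp O I b O B S -> S = B.
Proof.
  intros Hoff [l0 [[_ [HOx HIx]] HBx]] H. dA H l m1 k m2 j n P.
  assert (l0 = l) by (apply (lines_eq O I); auto). subst l0.
  assert (Hb := Hoff l (conj HOI (conj HOl HIl))).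
  assert (m2 = k) by (apply (par_inter_eq m2 k O); auto). subst m2.
  assert (Hkm1: m1 <> k).
  { intro E. apply (par_l_notin m1 l b O); auto. all: rewrite E; auto. }
  assert (P = b) by (apply (meet_uniq _ _ m1 k); auto). subst P.
  assert (n = j) by (apply (par_inter_eq n j b); auto). subst n.
  apply (meet_uniq _ _ j l); auto. apply (lne_of_in_notin b); auto.
Qed.


Lemma add_Pb l m1 k m2 b O A P : ~ inc b l -> par m1 l -> inc b m1 -> inc O k -> inc b k ->
  inc O l -> inc A l -> A <> O -> inc A m2 -> par m2 k -> inc P m2 -> inc P m1 -> P <> b.
Proof.
  intros Hb Hm1 Hbm1 HOk Hbk HOl HAl HAO HAm2 Hm2 HPm2 HPm1 E. subst P.
  assert (m2 = k) by (apply (par_inter_eq m2 k b); auto). subst m2.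
  apply HAO. apply (meet_uniq _ _ k l); auto. apply (lne_of_in_notin b); auto.
Qed.

Lemma add_BS O I b A B S : off O I b -> on_OI inc O I A -> on_OI inc O I B -> A <> O ->
  addp O I b A B S -> B <> S.
Proof.
  intros Hoff [l0 [[_ [HOx HIx]] HAx]] [l1 [[_ [HOy HIy]] HBx]] HAO H.
  dA H l m1 k m2 j n P.
  assert (l0 = l) by (apply (lines_eq O I); auto). subst l0.
  assert (l1 = l) by (apply (lines_eq O I); auto). subst l1.
  assert (Hb := Hoff l (conj HOI (conj HOl HIl))).
  assert (HPb : P <> b) by (apply (add_Pb l m1 k m2 b O A P); auto).
  intro E. subst S.
  assert (n = j) by (apply (par_inter_eq n j B); auto). subst n.
  assert (HBm1 : ~ inc B m1) by (apply (par_l_notin m1 l b B); auto).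
  apply HPb. apply (meet_uniq _ _ j m1); auto. apply (lne_of_in_notin B); auto.
Qed.

Lemma add_gen O I b b' A B S : off O I b -> off O I b' -> on_OI inc O I A -> on_OI inc O I B ->
  A <> O -> (forall m l, is_lt O I l -> inc b m -> par m l -> ~ inc b' m) ->
  addp O I b A B S -> addp O I b' A B S.
Proof.
  intros Hoff Hoff' HA0 HB0 HAO Hgen H.
  assert (HBS := add_BS O I b A B S Hoff HA0 HB0 HAO H).
  destruct HA0 as [l0 [[_ [HOx HIx]] HAx]]. destruct HB0 as [l1 [[_ [HOy HIy]] HBx]].
  destruct HA as [_ [_ [_ HD]]].
  dA H l m1 k m2 j n P.
  assert (l0 = l) by (apply (lines_eq O I); auto). subst l0.
  assert (l1 = l) by (apply (lines_eq O I); auto). subst l1.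
  assert (Hl : is_lt O I l) by (split; auto).
  assert (Hb := Hoff l Hl). assert (Hb' := Hoff' l Hl).
  assert (Hb'm1 := Hgen m1 l Hl Hbm1 Hm1).
  assert (HPb : P <> b) by (apply (add_Pb l m1 k m2 b O A P); auto).
  assert (HPl : ~ inc P l) by (apply (par_notin m1 l b P); auto).
  destruct (par_ex b' l) as [m1' [Hb'm1' Hm1']].
  assert (HOb': O <> b') by (intro; subst; auto).
  destruct (line_ex O b' HOb') as [k' [HOk' Hb'k']].
  destruct (par_ex A k') as [m2' [HAm2' Hm2']].
  assert (Hkm1': m1' <> k').
  { intro E. apply (par_l_notin m1' l b' O); auto. all: rewrite E; auto. }
  destruct (meet_par b' m1' k' m2' Hb'm1' Hb'k' Hkm1' Hm2') as [P' [HP'm1' HP'm2']].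
  assert (HP'b' : P' <> b') by (apply (add_Pb l m1' k' m2' b' O A P'); auto).
  assert (HP'l : ~ inc P' l) by (apply (par_notin m1' l b' P'); auto).
  assert (Hbb' : b <> b') by (intro; subst; auto).
  assert (Hm1m1' : m1 <> m1') by (intro; subst; auto).
  assert (HPP' : P <> P').
  { intro E; subst P'. apply Hm1m1'. apply (par_uniq P l); auto. }
  destruct (line_ex b b' Hbb') as [t [Hbt Hb't]].
  destruct (line_ex P P' HPP') as [t' [HPt' HP't']].
  assert (Hm1l : m1 <> l) by (apply (lne_of_in_notin b); auto).
  assert (Hlm1 : l <> m1) by auto.
  assert (Hm1'l : m1' <> l) by (apply (lne_of_in_notin b'); auto).
  assert (Hlm1' : l <> m1') by auto.
  assert (Hpm1m1' : par m1 m1') by (apply (par_trans _ l); auto; apply par_sym; auto).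
  assert (Hall1 : (par m1 l /\ par l m1' /\ par m1 m1') \/
                  (exists Z, inc Z m1 /\ inc Z l /\ inc Z m1')) by (left; repeat split; auto; apply par_sym; auto).
  assert (HAk : ~ inc A k).
  { intro HAk. apply HAO. apply (meet_uniq _ _ k l); auto. apply (lne_of_in_notin b); auto. }
  assert (HAk' : ~ inc A k').
  { intro HAk2. apply HAO. apply (meet_uniq _ _ k' l); auto. apply (lne_of_in_notin b'); auto. }
  assert (Hkm2 : k <> m2) by (intro; subst; auto).
  assert (Hkm2' : k' <> m2') by (intro; subst; auto).
  assert (HbO : b <> O) by auto.
  assert (HPA : P <> A) by (intro; subst; auto).
  assert (HAP' : A <> P') by (intro; subst; auto).
  assert (HOA : O <> A) by auto.
  assert (HbP : b <> P) by auto.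
  assert (Htt : par t t').
  { apply (HD b O b' P A P' m1 l m1' k m2 k' m2' t t'); unfold Defs.is_lt; repeat split; auto;
      apply par_sym; auto. }
  assert (Hall2 : (par l m1 /\ par m1 m1' /\ par l m1') \/
                  (exists Z, inc Z l /\ inc Z m1 /\ inc Z m1')) by (left; repeat split; auto; apply par_sym; auto).
  assert (HBm1 : ~ inc B m1) by (apply (par_l_notin m1 l b B); auto).
  assert (Hjn : j <> n).
  { intro E; subst n. apply HPb. apply (meet_uniq _ _ j m1); auto. apply (lne_of_in_notin B); auto. }
  assert (Htt' : t <> t').
  { intro E; subst t'. apply Hb'm1. replace m1 with t; auto. apply (lines_eq b P); auto. }
  assert (HSP : S <> P) by (intro; subst; auto).
  assert (HSP' : S <> P') by (intro; subst; auto).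
  assert (HBb' : B <> b') by (intro; subst; auto).
  destruct (line_ex B b' HBb') as [j' [HBj' Hb'j']].
  destruct (line_ex S P' HSP') as [n' [HSn' HP'n']].
  assert (Hjn' : par j' n').
  { apply (HD B b b' S P P' l m1 m1' j n t t' j' n'); unfold Defs.is_lt; repeat split; auto;
      apply par_sym; auto. }
  exists l, m1', k', m2', j', n', P'. unfold Defs.is_lt. repeat split; auto.
  apply par_sym; auto.
Qed.


Lemma off_of O I l c : is_lt O I l -> ~ inc c l -> off O I c.
Proof.
  intros [HOI [HO HI]] Hc l' [_ [HO' HI']].
  replace l' with l; auto. apply (lines_eq O I); auto.
Qed.

Lemma two_line l m1 u v X1 Y1 X2 Y2 : (forall X, inc X l \/ inc X m1) -> par m1 l ->
  inc X1 l -> inc Y1 m1 -> ~ inc Y1 l -> inc X2 l -> inc Y2 m1 ->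
  inc X1 u -> inc Y1 u -> inc X2 v -> inc Y2 v -> X1 <> X2 -> Y1 <> Y2 -> par u v.
Proof.
  intros W Hp HX1 HY1 HY1l HX2 HY2 HX1u HY1u HX2v HY2v H12 H12'.
  assert (HY2l : ~ inc Y2 l) by (apply (par_notin m1 l Y1 Y2); auto).
  assert (HX1m : ~ inc X1 m1) by (apply (par_l_notin m1 l Y1 X1); auto).
  assert (HX2m : ~ inc X2 m1) by (apply (par_l_notin m1 l Y1 X2); auto).
  right. intros Z [Zu Zv]. destruct (W Z) as [Zl|Zm].
  - apply H12. transitivity Z.
    + apply (meet_uniq _ _ u l); auto. apply (lne_of_in_notin Y1); auto.
    + apply (meet_uniq _ _ v l); auto. apply (lne_of_in_notin Y2); auto.
  - apply H12'. transitivity Z.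
    + apply (meet_uniq _ _ u m1); auto. apply (lne_of_in_notin X1); auto.
    + apply (meet_uniq _ _ v m1); auto. apply (lne_of_in_notin X2); auto.
Qed.

Lemma add_special O I b b' A B S l m1 : is_lt O I l -> ~ inc b l -> inc b m1 -> par m1 l ->
  inc b' m1 -> b <> b' -> (forall X, inc X l \/ inc X m1) -> on_OI inc O I A -> on_OI inc O I B ->
  A <> O -> addp O I b A B S -> addp O I b' A B S.
Proof.
  intros Hl Hb Hbm1 Hm1 Hb'm1 Hbb' W HA0 HB0 HAO H.
  assert (HBS := add_BS O I b A B S (off_of O I l b Hl Hb) HA0 HB0 HAO H).
  pose proof Hl as [HOI [HOl HIl]].
  destruct HA0 as [l0 [[_ [HOx HIx]] HAx]]. destruct HB0 as [l1 [[_ [HOy HIy]] HBx]].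
  assert (l0 = l) by (apply (lines_eq O I); auto). subst l0.
  assert (l1 = l) by (apply (lines_eq O I); auto). subst l1.
  assert (HSl : inc S l).
  { destruct H as (l2 & ?m & ?m & ?m & ?m & ?m & ?P & [_ [HOz HIz]] & H).
    assert (l2 = l) by (apply (lines_eq O I); auto). subst l2. tauto. }
  assert (Hb'l : ~ inc b' l) by (apply (par_notin m1 l b b'); auto).
  assert (HOb' : O <> b') by (intro; subst; auto).
  assert (HAb : A <> b) by (intro; subst; auto).
  assert (HBb' : B <> b') by (intro; subst; auto).
  assert (HSb : S <> b) by (intro; subst; auto).
  destruct (line_ex O b' HOb') as [k' [HOk' Hb'k']].
  destruct (line_ex A b HAb) as [m2' [HAm2' Hbm2']].
  destruct (line_ex B b' HBb') as [j' [HBj' Hb'j']].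
  destruct (line_ex S b HSb) as [n' [HSn' Hbn']].
  exists l, m1, k', m2', j', n', b. unfold Defs.is_lt. repeat split; auto.
  - apply (two_line l m1 m2' k' A b O b'); auto.
  - apply (two_line l m1 n' j' S b B b'); auto.
Qed.

Lemma add_indep O I b b' A B S : off O I b -> off O I b' -> on_OI inc O I A -> on_OI inc O I B ->
  addp O I b A B S -> addp O I b' A B S.
Proof.
  intros Hoff Hoff' HA0 HB0 H.
  destruct (classic (A = O)) as [->|HAO].
  - assert (E := add_O O I b B S Hoff HB0 H). subst S.
    destruct HB0 as [l [Hl HBl]].
    destruct (add_ex O I l b' O B Hl (Hoff' l Hl) HBl) as [S' H'].
    assert (E := add_O O I b' B S' Hoff' (ex_intro _ l (conj Hl HBl)) H'). subst S'. auto.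
  - pose proof HA0 as [l [Hl HAl]].
    assert (Hb := Hoff l Hl). assert (Hb' := Hoff' l Hl).
    destruct (par_ex b l) as [m1 [Hbm1 Hm1]].
    assert (Hgen : forall c d, ~ inc c l -> inc c m1 -> ~ inc d m1 ->
              forall m l', is_lt O I l' -> inc c m -> par m l' -> ~ inc d m).
    { intros c d Hcl Hcm Hdm m l' Hl' Hcm' Hm Hdm'.
      assert (l' = l) by (destruct Hl as [? [? ?]]; destruct Hl' as [? [? ?]]; apply (lines_eq O I); auto).
      subst l'. apply Hdm. replace m1 with m; auto. apply (par_uniq c l); auto. }
    destruct (classic (inc b' m1)) as [Hb'm1|Hb'm1].
    + destruct (classic (b = b')) as [<-|Hbb']; auto.
      destruct (classic (exists c, ~ inc c l /\ ~ inc c m1)) as [[c [Hcl Hcm1]]|Hno].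
      * destruct (par_ex c l) as [mc [Hcmc Hmc]].
        assert (Hb'mc : ~ inc b' mc).
        { intro Hb'mc. apply Hcm1. replace m1 with mc; auto. apply (par_uniq b' l); auto. }
        apply (add_gen O I c b'); auto. apply (off_of O I l); auto.
        { intros m l' Hl' Hcm Hm. assert (l' = l) by (destruct Hl as [? [? ?]]; destruct Hl' as [? [? ?]]; apply (lines_eq O I); auto).
          subst l'. replace m with mc; auto. apply (par_uniq c l); auto. }
        apply (add_gen O I b c); auto. apply (off_of O I l); auto. apply (Hgen b c); auto.
      * apply (add_special O I b b' A B S l m1); auto.
        intros X. apply NNPP. intro HX. apply Hno. exists X. tauto.
    + apply (add_gen O I b b'); auto. apply (Hgen b b'); auto.
Qed.


Ltac dM H l h m2 k j n P := destruct H as (l & h & m2 & k & j & n & P & [?HOI [?HOl ?HIl]] &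
  [?HIb [?HIh ?Hbh]] & ?HAm2 & ?Hm2 & [?HOb [?HOk ?Hbk]] & ?HPm2 & ?HPk & [?HBb [?HBj ?Hbj]] &
  ?HPn & ?Hn & ?HSn & ?HSl).

Lemma basic_facts O I l b h k : O <> I -> inc O l -> inc I l -> ~ inc b l -> inc I h -> inc b h ->
  inc O k -> inc b k -> ~ inc I k /\ h <> k /\ k <> l /\ h <> l.
Proof.
  intros HOI HO HI Hb HIh Hbh HOk Hbk.
  assert (HIk : ~ inc I k).
  { intro HIk. apply Hb. replace l with k; auto. apply (lines_eq O I); auto. }
  repeat split; auto.
  - intro; subst; auto.
  - intro; subst; auto.
  - intro; subst; auto.
Qed.

Lemma m2_ne_k m2 h k b I : par m2 h -> inc b h -> inc b k -> inc I h -> ~ inc I k -> m2 <> k.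
Proof.
  intros Hm2 Hbh Hbk HIh HIk E. subst m2. apply HIk.
  replace k with h; auto. symmetry. apply (par_inter_eq k h b); auto.
Qed.

Lemma mul_ex O I l b A B : is_lt O I l -> ~ inc b l -> inc B l -> exists S, mulp O I b A B S.
Proof.
  intros [HOI [HO HI]] Hb HB.
  assert (HIb: I <> b) by (intro; subst; auto).
  assert (HOb: O <> b) by (intro; subst; auto).
  destruct (line_ex I b HIb) as [h [HIh Hbh]].
  destruct (par_ex A h) as [m2 [HAm2 Hm2]].
  destruct (line_ex O b HOb) as [k [HOk Hbk]].
  destruct (basic_facts O I l b h k) as [HIk [Hhk [Hkl Hhl]]]; auto.
  destruct (meet_par b k h m2 Hbk Hbh (not_eq_sym Hhk) Hm2) as [P [HPk HPm2]].
  assert (HBb: B <> b) by (intro; subst; auto).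
  destruct (line_ex B b HBb) as [j [HBj Hbj]].
  destruct (par_ex P j) as [n [HPn Hn]].
  assert (Hjl: l <> j) by (intro; subst; auto).
  destruct (meet_par B l j n HB HBj Hjl Hn) as [S [HSl HSn]].
  exists S, l, h, m2, k, j, n, P. unfold Defs.is_lt. repeat split; auto.
Qed.

Lemma mul_uniq O I b A B S S' : off O I b -> on_OI inc O I B -> mulp O I b A B S -> mulp O I b A B S' -> S = S'.
Proof.
  intros Hoff [l0 [[_ [HOx HIx]] HBx]] H H'. dM H l h m2 k j n P. dM H' l' h' m2' k' j' n' P'.
  assert (l' = l) by (apply (lines_eq O I); auto). subst l'.
  assert (l0 = l) by (apply (lines_eq O I); auto). subst l0.
  assert (Hb := Hoff l (conj HOI (conj HOl HIl))).
  destruct (basic_facts O I l b h k) as [HIk [Hhk [Hkl Hhl]]]; auto.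
  assert (h' = h) by (apply (lines_eq I b); auto). subst h'.
  assert (k' = k) by (apply (lines_eq O b); auto). subst k'.
  assert (m2' = m2) by (apply (par_uniq A h); auto). subst m2'.
  assert (m2 <> k) by (apply (m2_ne_k m2 h k b I); auto).
  assert (P' = P) by (apply (meet_uniq _ _ m2 k); auto). subst P'.
  assert (j' = j) by (apply (lines_eq B b); auto). subst j'.
  assert (n' = n) by (apply (par_uniq P j); auto). subst n'.
  assert (Hjl : j <> l) by (apply (lne_of_in_notin b); auto).
  apply (meet_uniq _ _ n l); auto. apply (par_ne n j l B); auto.
Qed.

Lemma inv_cancel O I l b X Y Y' : is_lt O I l -> ~ inc b l -> inc Y l -> inc Y' l ->
  mulp O I b X Y I -> mulp O I b X Y' I -> Y = Y'.
Proof.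
  intros Hl Hb HY HY' H H'. dM H l0 h m2 k j n P. dM H' l' h' m2' k' j' n' P'.
  destruct Hl as [_ [HOx HIx]].
  assert (l0 = l) by (apply (lines_eq O I); auto). subst l0.
  assert (l' = l) by (apply (lines_eq O I); auto). subst l'.
  destruct (basic_facts O I l b h k) as [HIk [Hhk [Hkl Hhl]]]; auto.
  assert (h' = h) by (apply (lines_eq I b); auto). subst h'.
  assert (k' = k) by (apply (lines_eq O b); auto). subst k'.
  assert (m2' = m2) by (apply (par_uniq X h); auto). subst m2'.
  assert (m2 <> k) by (apply (m2_ne_k m2 h k b I); auto).
  assert (P' = P) by (apply (meet_uniq _ _ m2 k); auto). subst P'.
  assert (HPI : P <> I) by (intro; subst; auto).
  assert (n' = n) by (apply (lines_eq P I); auto). subst n'.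
  assert (j' = j) by (apply (par_uniq b n); auto; apply par_sym; auto). subst j'.
  apply (meet_uniq _ _ j l); auto. apply (lne_of_in_notin b); auto.
Qed.

Lemma inv_ex O I l b X : is_lt O I l -> ~ inc b l -> inc X l -> X <> O ->
  exists Y, inc Y l /\ mulp O I b X Y I.
Proof.
  intros Hl Hb HX HXO. pose proof Hl as [HOI [HO HI]].
  assert (HIb: I <> b) by (intro; subst; auto).
  assert (HOb: O <> b) by (intro; subst; auto).
  destruct (line_ex I b HIb) as [h [HIh Hbh]].
  destruct (par_ex X h) as [m2 [HXm2 Hm2]].
  destruct (line_ex O b HOb) as [k [HOk Hbk]].
  destruct (basic_facts O I l b h k) as [HIk [Hhk [Hkl Hhl]]]; auto.
  destruct (meet_par b k h m2 Hbk Hbh (not_eq_sym Hhk) Hm2) as [P [HPk HPm2]].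
  assert (HPl : ~ inc P l).
  { intro HPl. assert (P = O) by (apply (meet_uniq _ _ k l); auto). subst P.
    assert (m2 = l) by (apply (lines_eq X O); auto). subst m2.
    apply Hhl. symmetry. apply (par_inter_eq l h I); auto. }
  assert (HPI : P <> I) by (intro; subst; auto).
  destruct (line_ex P I HPI) as [n [HPn HIn]].
  destruct (par_ex b n) as [j [Hbj Hj]].
  assert (Hnl: l <> n) by (intro; subst; auto).
  destruct (meet_par I l n j HI HIn Hnl Hj) as [Y [HYl HYj]].
  exists Y. split; auto.
  exists l, h, m2, k, j, n, P. unfold Defs.is_lt. repeat split; auto.
  intro; subst; auto. apply par_sym; auto.
Qed.

Lemma mul_O1 O I b B S : off O I b -> on_OI inc O I B -> mulp O I b O B S -> S = O.
Proof.
  intros Hoff [l0 [[_ [HOx HIx]] HBx]] H. dM H l h m2 k j n P.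
  assert (l0 = l) by (apply (lines_eq O I); auto). subst l0.
  assert (Hb := Hoff l (conj HOI (conj HOl HIl))).
  destruct (basic_facts O I l b h k) as [HIk [Hhk [Hkl Hhl]]]; auto.
  assert (m2 <> k) by (apply (m2_ne_k m2 h k b I); auto).
  assert (P = O) by (apply (meet_uniq _ _ m2 k); auto). subst P.
  assert (Hjl : j <> l) by (apply (lne_of_in_notin b); auto).
  apply (meet_uniq _ _ n l); auto. apply (par_ne n j l B); auto.
Qed.

Lemma mul_O2 O I b A S : off O I b -> mulp O I b A O S -> S = O.
Proof.
  intros Hoff H. dM H l h m2 k j n P.
  assert (Hb := Hoff l (conj HOI (conj HOl HIl))).
  destruct (basic_facts O I l b h k) as [HIk [Hhk [Hkl Hhl]]]; auto.
  assert (j = k) by (apply (lines_eq O b); auto). subst j.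
  assert (n = k) by (apply (par_inter_eq n k P); auto). subst n.
  apply (meet_uniq _ _ k l); auto.
Qed.

Lemma mul_I O I b B S : off O I b -> on_OI inc O I B -> mulp O I b I B S -> S = B.
Proof.
  intros Hoff [l0 [[_ [HOx HIx]] HBx]] H. dM H l h m2 k j n P.
  assert (l0 = l) by (apply (lines_eq O I); auto). subst l0.
  assert (Hb := Hoff l (conj HOI (conj HOl HIl))).
  destruct (basic_facts O I l b h k) as [HIk [Hhk [Hkl Hhl]]]; auto.
  assert (m2 = h) by (apply (par_inter_eq m2 h I); auto). subst m2.
  assert (P = b) by (apply (meet_uniq _ _ h k); auto). subst P.
  assert (n = j) by (apply (par_inter_eq n j b); auto). subst n.
  apply (meet_uniq _ _ j l); auto. apply (lne_of_in_notin b); auto.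
Qed.


Lemma mul_P_facts O I l b h k m2 A P : O <> I -> inc O l -> inc I l -> ~ inc b l -> inc I h -> inc b h ->
  inc O k -> inc b k -> inc A l -> A <> O -> A <> I -> inc A m2 -> par m2 h -> inc P m2 -> inc P k ->
  P <> b /\ P <> O /\ ~ inc P l.
Proof.
  intros HOI HO HI Hb HIh Hbh HOk Hbk HAl HAO HAI HAm2 Hm2 HPm2 HPk.
  destruct (basic_facts O I l b h k) as [HIk [Hhk [Hkl Hhl]]]; auto.
  assert (HPb : P <> b).
  { intro; subst P. assert (m2 = h) by (apply (par_inter_eq m2 h b); auto). subst m2.
    apply HAI. apply (meet_uniq _ _ h l); auto. }
  assert (HPO : P <> O).
  { intro; subst P. assert (m2 = l) by (apply (lines_eq A O); auto). subst m2.
    apply Hhl. symmetry. apply (par_inter_eq l h I); auto. }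
  repeat split; auto. intro HPl. apply HPO. apply (meet_uniq _ _ k l); auto.
Qed.

Lemma mul_gen O I b b' A B S : off O I b -> off O I b' -> on_OI inc O I A -> on_OI inc O I B ->
  A <> O -> A <> I -> B <> O -> (forall m, inc O m -> inc b m -> ~ inc b' m) ->
  mulp O I b A B S -> mulp O I b' A B S.
Proof.
  intros Hoff Hoff' HA0 HB0 HAO HAI HBO Hgen H.
  destruct HA0 as [l0 [[_ [HOx HIx]] HAx]]. destruct HB0 as [l1 [[_ [HOy HIy]] HBx]].
  destruct HA as [_ [_ [_ HD]]].
  dM H l h m2 k j n P.
  assert (l0 = l) by (apply (lines_eq O I); auto). subst l0.
  assert (l1 = l) by (apply (lines_eq O I); auto). subst l1.
  assert (Hl : is_lt O I l) by (split; auto).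
  assert (Hb := Hoff l Hl). assert (Hb' := Hoff' l Hl).
  assert (Hb'k := Hgen k HOk Hbk).
  destruct (basic_facts O I l b h k) as [HIk [Hhk [Hkl Hhl]]]; auto.
  destruct (mul_P_facts O I l b h k m2 A P) as [HPb [HPO HPl]]; auto.
  assert (HIb': I <> b') by (intro; subst; auto).
  assert (HOb': O <> b') by (intro; subst; auto).
  destruct (line_ex I b' HIb') as [h' [HIh' Hb'h']].
  destruct (par_ex A h') as [m2' [HAm2' Hm2']].
  destruct (line_ex O b' HOb') as [k' [HOk' Hb'k']].
  destruct (basic_facts O I l b' h' k') as [HIk' [Hhk' [Hkl' Hhl']]]; auto.
  destruct (meet_par b' k' h' m2' Hb'k' Hb'h' (not_eq_sym Hhk') Hm2') as [P' [HP'k' HP'm2']].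
  destruct (mul_P_facts O I l b' h' k' m2' A P') as [HP'b' [HP'O HP'l]]; auto.
  assert (Hbb' : b <> b') by (intro; subst; auto).
  assert (Hkk' : k <> k') by (intro; subst; auto).
  assert (HPP' : P <> P').
  { intro E; subst P'. apply HPO. apply (meet_uniq _ _ k k'); auto. }
  destruct (line_ex b b' Hbb') as [t [Hbt Hb't]].
  destruct (line_ex P P' HPP') as [t' [HPt' HP't']].
  assert (Hlk : l <> k) by auto. assert (Hlk' : l <> k') by auto.
  assert (Hall1 : (par k l /\ par l k' /\ par k k') \/ (exists Z, inc Z k /\ inc Z l /\ inc Z k'))
    by (right; exists O; auto).
  assert (Hall2 : (par l k /\ par k k' /\ par l k') \/ (exists Z, inc Z l /\ inc Z k /\ inc Z k'))
    by (right; exists O; auto).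
  assert (HAh : ~ inc A h).
  { intro HAh. apply HAI. apply (meet_uniq _ _ h l); auto. }
  assert (HAh' : ~ inc A h').
  { intro HAh2. apply HAI. apply (meet_uniq _ _ h' l); auto. }
  assert (Hhm2 : h <> m2) by (intro; subst; auto).
  assert (Hhm2' : h' <> m2') by (intro; subst; auto).
  assert (HbI : b <> I) by auto.
  assert (HPA : P <> A) by (intro; subst; auto).
  assert (HAP' : A <> P') by (intro; subst; auto).
  assert (HIA : I <> A) by auto.
  assert (HbP : b <> P) by auto.
  assert (Hb'P' : b' <> P') by auto.
  assert (Htt : par t t').
  { apply (HD b I b' P A P' k l k' h m2 h' m2' t t'); unfold Defs.is_lt; repeat split; auto;
      apply par_sym; auto. }
  assert (HBk : ~ inc B k).
  { intro HBk. apply HBO. apply (meet_uniq _ _ k l); auto. }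
  assert (Hjn : j <> n).
  { intro E; subst n. apply HPb. apply (meet_uniq _ _ j k); auto. apply (lne_of_in_notin B); auto. }
  assert (HBS : B <> S).
  { intro E; subst S. apply Hjn. symmetry. apply (par_inter_eq n j B); auto. }
  assert (Htt' : t <> t').
  { intro E; subst t'. apply Hb'k. replace k with t; auto. apply (lines_eq b P); auto. }
  assert (HSP : S <> P) by (intro; subst; auto).
  assert (HSP' : S <> P') by (intro; subst; auto).
  assert (HBb' : B <> b') by (intro; subst; auto).
  destruct (line_ex B b' HBb') as [j' [HBj' Hb'j']].
  destruct (line_ex S P' HSP') as [n' [HSn' HP'n']].
  assert (Hjn' : par j' n').
  { apply (HD B b b' S P P' l k k' j n t t' j' n'); unfold Defs.is_lt; repeat split; auto;
      apply par_sym; auto. }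
  exists l, h', m2', k', j', n', P'. unfold Defs.is_lt. repeat split; auto.
  apply par_sym; auto.
Qed.

Lemma mul_indep O I b b' A B S : off O I b -> off O I b' -> on_OI inc O I A -> on_OI inc O I B ->
  mulp O I b A B S -> mulp O I b' A B S.
Proof.
  intros Hoff Hoff' HA0 HB0 H.
  pose proof HB0 as [l [Hl HBl]].
  destruct (mul_ex O I l b' A B Hl (Hoff' l Hl) HBl) as [S' H'].
  destruct (classic (A = O)) as [->|HAO].
  { assert (S = S') by (rewrite (mul_O1 O I b B S Hoff HB0 H), (mul_O1 O I b' B S' Hoff' HB0 H'); auto). subst; auto. }
  destruct (classic (B = O)) as [->|HBO].
  { assert (S = S') by (rewrite (mul_O2 O I b A S Hoff H), (mul_O2 O I b' A S' Hoff' H'); auto). subst; auto. }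
  destruct (classic (A = I)) as [->|HAI].
  { assert (S = S') by (rewrite (mul_I O I b B S Hoff HB0 H), (mul_I O I b' B S' Hoff' HB0 H'); auto). subst; auto. }
  clear S' H'.
  pose proof Hl as [HOI [HO HI]].
  assert (Hb := Hoff l Hl). assert (Hb' := Hoff' l Hl).
  assert (HOb: O <> b) by (intro; subst; auto).
  destruct (line_ex O b HOb) as [k [HOk Hbk]].
  assert (HIk : ~ inc I k).
  { intro HIk. apply Hb. replace l with k; auto. apply (lines_eq O I); auto. }
  destruct (classic (inc b' k)) as [Hb'k|Hb'k].
  - destruct (classic (b = b')) as [<-|Hbb']; auto.
    destruct (par_ex b l) as [m1 [Hbm1 Hm1]].
    destruct (par_ex I k) as [m [HIm Hm]].
    assert (Hnp : ~ par m1 m).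
    { intro Hp. assert (par l k) by (apply (par_trans _ m1); [apply par_sym; auto|];
        apply (par_trans _ m); auto).
      apply HIk. replace k with l; auto. apply (par_inter_eq l k O); auto. }
    destruct (not_par_meet m1 m Hnp) as [c [Hcm1 Hcm]].
    assert (Hcl : ~ inc c l) by (apply (par_notin m1 l b c); auto).
    assert (Hmk : m <> k) by (intro; subst; auto).
    assert (Hck : ~ inc c k).
    { intro Hck. apply Hmk. apply (par_inter_eq m k c); auto. }
    assert (Hoffc : off O I c) by (apply (off_of O I l); auto).
    apply (mul_gen O I c b'); auto.
    { intros m' HOm' Hcm' Hb'm'. apply Hck. replace k with m'; auto.
      apply (lines_eq O b'); auto. intro; subst; auto. }
    apply (mul_gen O I b c); auto.
    { intros m' HOm' Hbm' Hcm'. apply Hck. replace k with m'; auto. apply (lines_eq O b); auto. }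
  - apply (mul_gen O I b b'); auto.
    intros m' HOm' Hbm' Hb'm'. apply Hb'k. replace k with m'; auto. apply (lines_eq O b); auto.
Qed.


Lemma choose_spec (d : point) (P : point -> Prop) : (exists x, P x) -> P (choose_pt d P).
Proof. intros. unfold choose_pt. apply epsilon_spec; auto. Qed.

Lemma aux_off O I : O <> I -> off O I (aux_pt inc O I).
Proof.
  intros HOI. unfold aux_pt. apply choose_spec.
  destruct (line_ex O I HOI) as [l [HO HI]].
  destruct (off_line l) as [P HP]. exists P. apply (off_of O I l); auto. split; auto.
Qed.

Lemma addp_on O I b A B S : addp O I b A B S -> on_OI inc O I S.
Proof. intros H. dA H l m1 k m2 j n P. exists l. split; auto. split; auto. Qed.

Lemma mulp_on O I b A B S : mulp O I b A B S -> on_OI inc O I S.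
Proof. intros H. dM H l h m2 k j n P. exists l. split; auto. split; auto. Qed.

Lemma add_char O I A B b : O <> I -> off O I b -> on_OI inc O I A -> on_OI inc O I B ->
  addp O I b A B (add_OI inc O I A B).
Proof.
  intros HOI Hb HA0 HB0. rewrite add_OI_eq.
  assert (Ha := aux_off O I HOI).
  apply (add_indep O I (aux_pt inc O I)); auto.
  apply choose_spec. destruct HB0 as [l [Hl HBl]]. apply (add_ex O I l); auto.
Qed.

Lemma add_is O I A B b S : O <> I -> off O I b -> on_OI inc O I A -> on_OI inc O I B ->
  addp O I b A B S -> add_OI inc O I A B = S.
Proof. intros. apply (add_uniq O I b A B); auto. apply add_char; auto. Qed.

Lemma mul_char O I A B b : O <> I -> off O I b -> on_OI inc O I A -> on_OI inc O I B ->
  mulp O I b A B (mul_OI inc O I A B).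
Proof.
  intros HOI Hb HA0 HB0. rewrite mul_OI_eq.
  assert (Ha := aux_off O I HOI).
  apply (mul_indep O I (aux_pt inc O I)); auto.
  apply choose_spec. destruct HB0 as [l [Hl HBl]]. apply (mul_ex O I l); auto.
Qed.

Lemma mul_is O I A B b S : O <> I -> off O I b -> on_OI inc O I A -> on_OI inc O I B ->
  mulp O I b A B S -> mul_OI inc O I A B = S.
Proof. intros. apply (mul_uniq O I b A B); auto. apply mul_char; auto. Qed.

Lemma on_line O I l X : is_lt O I l -> on_OI inc O I X -> inc X l.
Proof.
  intros [HOI [HO HI]] [l' [[_ [HO' HI']] HX]]. replace l with l'; auto. apply (lines_eq O I); auto.
Qed.

Lemma line_on O I l X : is_lt O I l -> inc X l -> on_OI inc O I X.
Proof. intros. exists l; auto. Qed.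

Lemma opp_char O I X b : O <> I -> off O I b -> on_OI inc O I X ->
  on_OI inc O I (opp_OI inc O I X) /\ addp O I b X (opp_OI inc O I X) O.
Proof.
  intros HOI Hb HX.
  destruct (line_ex O I HOI) as [l [HO HI]]. assert (Hl : is_lt O I l) by (split; auto).
  assert (Hs : on_OI inc O I (opp_OI inc O I X) /\ add_OI inc O I X (opp_OI inc O I X) = O).
  { unfold opp_OI. apply choose_spec.
    destruct (opp_ex O I l b X Hl (Hb l Hl)) as [Y [HYl HY]].
    exists Y. split. apply (line_on O I l); auto. apply (add_is O I X Y b); auto.
    apply (line_on O I l); auto. }
  destruct Hs as [Hs1 Hs2]. split; auto.
  assert (H := add_char O I X (opp_OI inc O I X) b HOI Hb HX Hs1). rewrite Hs2 in H. exact H.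
Qed.

Lemma opp_is O I X Y b : O <> I -> off O I b -> on_OI inc O I X -> on_OI inc O I Y ->
  addp O I b X Y O -> opp_OI inc O I X = Y.
Proof.
  intros HOI Hb HX HY H. destruct (opp_char O I X b HOI Hb HX) as [H1 H2].
  destruct (line_ex O I HOI) as [l [HO HI]]. assert (Hl : is_lt O I l) by (split; auto).
  apply (add_cancel2 O I l b X _ _ O Hl (Hb l Hl)); auto; apply (on_line O I); auto.
Qed.

Lemma inv_char O I X b : O <> I -> off O I b -> on_OI inc O I X -> X <> O ->
  on_OI inc O I (inv_OI inc O I X) /\ mulp O I b X (inv_OI inc O I X) I.
Proof.
  intros HOI Hb HX HXO.
  destruct (line_ex O I HOI) as [l [HO HI]]. assert (Hl : is_lt O I l) by (split; auto).
  assert (Hs : on_OI inc O I (inv_OI inc O I X) /\ mul_OI inc O I X (inv_OI inc O I X) = I).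
  { unfold inv_OI. apply choose_spec.
    destruct (inv_ex O I l b X Hl (Hb l Hl)) as [Y [HYl HY]]; auto. apply (on_line O I); auto.
    exists Y. split. apply (line_on O I l); auto. apply (mul_is O I X Y b); auto.
    apply (line_on O I l); auto. }
  destruct Hs as [Hs1 Hs2]. split; auto.
  assert (H := mul_char O I X (inv_OI inc O I X) b HOI Hb HX Hs1). rewrite Hs2 in H. exact H.
Qed.

Lemma inv_is O I X Y b : O <> I -> off O I b -> on_OI inc O I X -> on_OI inc O I Y -> X <> O ->
  mulp O I b X Y I -> inv_OI inc O I X = Y.
Proof.
  intros HOI Hb HX HY HXO H. destruct (inv_char O I X b HOI Hb HX HXO) as [H1 H2].
  destruct (line_ex O I HOI) as [l [HO HI]]. assert (Hl : is_lt O I l) by (split; auto).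
  apply (inv_cancel O I l b X); auto. apply (on_line O I); auto. apply (on_line O I); auto.
Qed.

Lemma sub_on O I X Y : O <> I -> on_OI inc O I X -> on_OI inc O I Y -> on_OI inc O I (sub_OI inc O I X Y).
Proof.
  intros HOI HX HY. assert (Hb := aux_off O I HOI).
  destruct (opp_char O I Y _ HOI Hb HY) as [H1 _].
  unfold sub_OI. apply (addp_on O I (aux_pt inc O I) X (opp_OI inc O I Y)). apply add_char; auto.
Qed.

Lemma sub_ne O I B C : O <> I -> on_OI inc O I B -> on_OI inc O I C -> B <> C -> sub_OI inc O I B C <> O.
Proof.
  intros HOI HB HC HBC E. apply HBC. assert (Hb := aux_off O I HOI).
  destruct (opp_char O I C _ HOI Hb HC) as [H1 H2].
  assert (H3 := add_char O I B (opp_OI inc O I C) _ HOI Hb HB H1).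
  unfold sub_OI in E. rewrite E in H3.
  destruct (line_ex O I HOI) as [l [HO HI]]. assert (Hl : is_lt O I l) by (split; auto).
  apply (add_cancel1 O I l (aux_pt inc O I) B C (opp_OI inc O I C) O Hl (Hb l Hl)); auto;
  apply (on_line O I); auto.
Qed.


Section Transport.
Variables (f : point -> point) (F : line -> line).
Hypothesis Hinj : forall P Q, f P = f Q -> P = Q.
Hypothesis HF : forall l, image_is inc f l (F l).

Lemma tr_inc P l : inc P l -> inc (f P) (F l).
Proof. intros H. apply (HF l (f P)). exists P; auto. Qed.

Lemma tr_lt P Q l : is_lt P Q l -> is_lt (f P) (f Q) (F l).
Proof. intros [H1 [H2 H3]]. split; [|split; apply tr_inc; auto]. intro E; apply H1; auto. Qed.

Lemma tr_par l m : par l m -> par (F l) (F m).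
Proof.
  intros [->|H]. left; auto. right. intros X [H1 H2].
  apply (HF l X) in H1. apply (HF m X) in H2.
  destruct H1 as [P [HP E1]]. destruct H2 as [Q [HQ E2]].
  subst X. apply Hinj in E2. subst Q. apply (H P); auto.
Qed.

Lemma tr_addp O I b A B S : addp O I b A B S -> addp (f O) (f I) (f b) (f A) (f B) (f S).
Proof.
  intros H. dA H l m1 k m2 j n P.
  exists (F l), (F m1), (F k), (F m2), (F j), (F n), (f P).
  repeat split; try apply tr_inc; try apply tr_par; auto;
    try (intro E; apply Hinj in E; auto).
Qed.

Lemma tr_mulp O I b A B S : mulp O I b A B S -> mulp (f O) (f I) (f b) (f A) (f B) (f S).
Proof.
  intros H. dM H l h m2 k j n P.
  exists (F l), (F h), (F m2), (F k), (F j), (F n), (f P).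
  repeat split; try apply tr_inc; try apply tr_par; auto;
    try (intro E; apply Hinj in E; auto).
Qed.

Lemma tr_on O I X : on_OI inc O I X -> on_OI inc (f O) (f I) (f X).
Proof. intros [l [Hl HX]]. exists (F l). split. apply tr_lt; auto. apply tr_inc; auto. Qed.

Lemma tr_off O I b : O <> I -> off O I b -> off (f O) (f I) (f b).
Proof.
  intros HOI Hb l' [HOI' [HO' HI']] Hbl'.
  destruct (line_ex O I HOI) as [l [HO HI]].
  assert (l' = F l) by (apply (lines_eq (f O) (f I)); auto; apply tr_inc; auto). subst l'.
  apply (HF l) in Hbl'. destruct Hbl' as [P [HP E]]. apply Hinj in E. subst P.
  apply (Hb l); auto. split; auto.
Qed.

Lemma main_sec O I A B C : O <> I -> on_OI inc O I A -> on_OI inc O I B -> on_OI inc O I C -> B <> C ->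
  f (ratio_OI inc O I A B C) = ratio_OI inc (f O) (f I) (f A) (f B) (f C).
Proof.
  intros HOI HA0 HB0 HC0 HBC.
  assert (Hb := aux_off O I HOI).
  set (b := aux_pt inc O I) in *.
  assert (Hb' := tr_off O I b HOI Hb).
  assert (HOI' : f O <> f I) by (intro E; apply Hinj in E; auto).
  assert (phi_add : forall X Y, on_OI inc O I X -> on_OI inc O I Y ->
     f (add_OI inc O I X Y) = add_OI inc (f O) (f I) (f X) (f Y)).
  { intros X Y HX HY. symmetry. apply (add_is _ _ _ _ (f b)); try apply tr_on; auto.
    apply tr_addp. apply add_char; auto. }
  assert (phi_mul : forall X Y, on_OI inc O I X -> on_OI inc O I Y ->
     f (mul_OI inc O I X Y) = mul_OI inc (f O) (f I) (f X) (f Y)).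
  { intros X Y HX HY. symmetry. apply (mul_is _ _ _ _ (f b)); try apply tr_on; auto.
    apply tr_mulp. apply mul_char; auto. }
  assert (phi_opp : forall X, on_OI inc O I X -> f (opp_OI inc O I X) = opp_OI inc (f O) (f I) (f X)).
  { intros X HX. destruct (opp_char O I X b HOI Hb HX) as [H1 H2].
    symmetry. apply (opp_is _ _ _ _ (f b)); try apply tr_on; auto. apply tr_addp; auto. }
  assert (phi_inv : forall X, on_OI inc O I X -> X <> O ->
     f (inv_OI inc O I X) = inv_OI inc (f O) (f I) (f X)).
  { intros X HX HXO. destruct (inv_char O I X b HOI Hb HX HXO) as [H1 H2].
    symmetry. apply (inv_is _ _ _ _ (f b)); try apply tr_on; auto.
    all: first [apply tr_mulp; auto | intro E; apply Hinj in E; auto]. }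
  assert (phi_sub : forall X Y, on_OI inc O I X -> on_OI inc O I Y ->
     f (sub_OI inc O I X Y) = sub_OI inc (f O) (f I) (f X) (f Y)).
  { intros X Y HX HY. unfold sub_OI. rewrite phi_add; auto. rewrite phi_opp; auto.
    apply (opp_char O I Y b); auto. }
  unfold ratio_OI.
  assert (Hs1 := sub_on O I B C HOI HB0 HC0).
  assert (Hs2 := sub_on O I A C HOI HA0 HC0).
  assert (Hne := sub_ne O I B C HOI HB0 HC0 HBC).
  rewrite phi_mul; auto.
  - rewrite phi_inv, !phi_sub; auto.
  - apply (inv_char O I _ b); auto.
Qed.

End Transport.

End Geo.

Theorem mainTheorem11 (point line : Type) (inc : point -> line -> Prop)
  (HA : desargues_affine_plane inc) (O I : point) (HOI : O <> I)
  (phi : point -> point) (Hphi : translation inc phi) :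
  forall A B C : point,
    on_OI inc O I A -> on_OI inc O I B -> on_OI inc O I C -> B <> C ->
    phi (ratio_OI inc O I A B C) =
    ratio_OI inc (phi O) (phi I) (phi A) (phi B) (phi C).
Proof.
  intros A B C HA0 HB0 HC0 HBC.
  assert (Hcol : (forall P Q, phi P = phi Q -> P = Q) /\ (forall l, exists m, image_is inc phi l m)).
  { destruct Hphi as [Hid | [[[Hinj [_ [Himg _]]] _] _]].
    - split. intros P Q E. rewrite !Hid in E; auto.
      intros l. exists l. intros X. split. intros HX. exists X. rewrite Hid; auto.
      intros [P [HP E]]. rewrite Hid in E. subst; auto.
    - split; auto. }
  destruct Hcol as [Hinj Himg].
  destruct (choice _ Himg) as [F HF].
  apply (main_sec point line inc HA phi F); auto.
Qed.
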